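(* Let $n\ge2$ and let $M\in\mathbb{R}^{n\times n}$ be Metzler, output unstable and nonsingular. Then (a) $S^TM^{-1}e_n\ge0$ and $e_n^TM^{-1}S\ge0$ entrywise, and $e_n^TM^{-1}e_n>0$; (b) for every $b_0\in\mathbb{R}^n_{\ge0}$, $g_0:=-e_n^TM^{-1}b_0\le0$, and $g_n:=-e_n^TM^{-1}e_n<0$.
   Context: $S:=[e_1\ \cdots\ e_{n-1}]\in\mathbb{R}^{n\times(n-1)}$, with $e_i$ the standard basis vectors. Metzler: all off-diagonal entries nonnegative. Hurwitz stable: all eigenvalues have negative real part. A matrix $M\in\mathbb{R}^{n\times n}$ is output unstable if $S^TMS$ is Hurwitz stable and $e_n^TMe_n>0$. *)

(* Defs.v *)
From HB Require Import structures.
From mathcomp Require Import all_boot all_order all_algebra.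
From mathcomp Require Import reals.
From mathcomp Require Import complex.
Set Implicit Arguments. Unset Strict Implicit. Unset Printing Implicit Defensive.
Import Order.TTheory GRing.Theory Num.Theory.
Local Open Scope ring_scope.
Local Open Scope complex_scope.

(* Matrices are m.+1 x m.+1, i.e. n = m.+1. *)

Definition metzler (R : realType) (k : nat) (M : 'M[R]_k) : Prop :=
  forall i j : 'I_k, i != j -> 0 <= M i j.

Definition hurwitz (R : realType) (k : nat) (M : 'M[R]_k) : Prop :=
  forall z : R[i], root (char_poly (map_mx (fun x : R => x%:C) M)) z ->
    Re z < 0.

(* S = [e_1 ... e_{n-1}] in R^{n x (n-1)} with n = m.+1. *)
Definition Smx (R : realType) (m : nat) : 'M[R]_(m.+1, m) :=
  \matrix_(i < m.+1, j < m) (i == widen_ord (leqnSn m) j)%:R.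

Definition en (R : realType) (m : nat) : 'cV[R]_m.+1 :=
  \col_(i < m.+1) (i == ord_max)%:R.

Definition output_unstable (R : realType) (m : nat) (M : 'M[R]_m.+1) : Prop :=
  hurwitz ((Smx R m)^T *m M *m Smx R m) /\ 0 < ((en R m)^T *m M *m en R m) 0 0.

Definition nonneg_mx (R : realType) (p q : nat) (A : 'M[R]_(p, q)) : Prop :=
  forall i j, 0 <= A i j.

(* Main.v *)
Require Import Defs.
From HB Require Import structures.
From mathcomp Require Import all_boot all_order all_algebra.
From mathcomp Require Import reals complex polyrcf.
From mathcomp Require Import ring lra.
Import Order.TTheory GRing.Theory Num.Theory.
Local Open Scope ring_scope.

Section S.
Variable R : realType.

Lemma cpE n (A : 'M[R]_n) x : (char_poly A).[x] = \det (x%:M - A).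
Proof.
rewrite /char_poly -horner_evalE -det_map_mx /char_poly_mx map_mxB /=.
congr (\det (_ - _)); apply/matrixP => i j; rewrite !mxE ?horner_evalE.
  by case: (i == j); rewrite /= ?mulr1n ?mulr0n ?hornerX ?hornerC.
by rewrite hornerC.
Qed.

Lemma hurwitz_noroot n (A : 'M[R]_n) : hurwitz A ->
  forall x, 0 <= x -> ~~ root (char_poly A) x.
Proof.
move=> H x x0; apply/negP => rx.
have : root (char_poly (map_mx (real_complex R) A)) (x%:C)%C.
  by rewrite -map_char_poly fmorph_root.
move/H => /= h. have hr : (x%:C)%C \is Num.real by rewrite complex_real.
rewrite (Creal_ReP _ hr) ltcE /= in h.
by move: x0; rewrite leNgt; case/andP: h => _ ->.
Qed.

Lemma monic_pos (p : {poly R}) x : p \is monic ->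
  (forall y, x <= y -> ~~ root p y) -> 0 < p.[x].
Proof.
move=> /monicP lc H.
have [n Hn] : exists n, forall y, y >= n -> p.[y] >= 1.
  by rewrite -lc; apply: poly_pinfty_gt_lc; rewrite lc ltr01.
rewrite ltNge; apply/negP => px.
have xy : x <= Num.max x n by rewrite le_max lexx.
have py : 1 <= p.[Num.max x n] by apply: Hn; rewrite le_max lexx orbT.
have hs : p.[x] <= 0 <= p.[Num.max x n] by rewrite px (le_trans ler01 py).
have [z /andP[zx _] rz] := @poly_ivt _ p _ _ xy hs.
by move: (H z zx); rewrite rz.
Qed.

Definition nn {p q} (A : 'M[R]_(p, q)) := forall i j, 0 <= A i j.

Lemma nn_mul p q r (A : 'M[R]_(p, q)) (B : 'M[R]_(q, r)) :
  nn A -> nn B -> nn (A *m B).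
Proof. by move=> hA hB i j; rewrite mxE; apply: sumr_ge0 => k _; apply: mulr_ge0. Qed.

Lemma nn_add p q (A B : 'M[R]_(p, q)) : nn A -> nn B -> nn (A + B).
Proof. by move=> hA hB i j; rewrite mxE; apply: addr_ge0. Qed.

Lemma nn_scale p q a (A : 'M[R]_(p, q)) : 0 <= a -> nn A -> nn (a *: A).
Proof. by move=> ha hA i j; rewrite mxE; apply: mulr_ge0. Qed.

Lemma nn_block p1 p2 q1 q2 (A : 'M[R]_(p1, q1)) (B : 'M[R]_(p1, q2))
  (C : 'M[R]_(p2, q1)) (D : 'M[R]_(p2, q2)) :
  nn A -> nn B -> nn C -> nn D -> nn (block_mx A B C D).
Proof.
move=> hA hB hC hD i j.
rewrite -(splitK i) -(splitK j); case: (split i) => i'; case: (split j) => j' /=;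
 by rewrite ?block_mxEul ?block_mxEur ?block_mxEdl ?block_mxEdr.
Qed.

Lemma nn_scalar1 a : 0 <= a -> nn (a%:M : 'M[R]_1).
Proof. by move=> ha i j; rewrite !ord1 mxE eqxx mulr1n. Qed.


Lemma schur_det k (a : R) (u : 'M[R]_(1,k)) (v : 'M[R]_(k,1)) (C : 'M[R]_k) :
  C \in unitmx ->
  \det (block_mx a%:M (-u) (-v) C : 'M_(1 + k)) =
  \det C * (a - (u *m invmx C *m v) 0 0).
Proof.
move=> Cu; set w := (u *m invmx C *m v) 0 0.
have E : block_mx a%:M (-u) (-v) C =
  block_mx 1%:M (-(u *m invmx C)) 0 1%:M *m block_mx (a - w)%:M 0 (-v) C.
  rewrite mulmx_block !mul1mx !mul0mx ?mulmx0 !add0r ?addr0 mulNmx mulmxN opprK.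
  rewrite mulNmx -[u *m invmx C *m C]mulmxA mulVmx // mulmx1.
  by rewrite [u *m _ *m _]mx11_scalar -/w -raddfD /= subrK.
rewrite E det_mulmx det_ublock det_lblock !det1 det_scalar1 mul1r ?mulr1.
by rewrite mul1r mulrC.
Qed.

Lemma schur_inv k (a : R) (u : 'M[R]_(1,k)) (v : 'M[R]_(k,1)) (C : 'M[R]_k) :
  C \in unitmx -> a - (u *m invmx C *m v) 0 0 != 0 ->
  invmx (block_mx a%:M (-u) (-v) C : 'M_(1 + k)) =
  let s := a - (u *m invmx C *m v) 0 0 in
  block_mx (s^-1)%:M (s^-1 *: (u *m invmx C)) (s^-1 *: (invmx C *m v))
    (invmx C + s^-1 *: (invmx C *m v *m (u *m invmx C))).
Proof.
move=> Cu; set w := (u *m invmx C *m v) 0 0 => s0 /=.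
set s := a - w.
set X := block_mx _ _ _ _.
set Y := block_mx _ _ _ _.
suff h : Y *m X = 1%:M.
  have [_ Xu] := mulmx1_unit h.
  by rewrite -[RHS]mulmx1 -(mulmxV Xu) mulmxA h mul1mx.
have uRv : u *m invmx C *m v = w%:M by rewrite [LHS]mx11_scalar.
rewrite mulmx_block scalar_mx_block.
congr block_mx.
- rewrite mul_scalar_mx scale_scalar_mx mulmxN -scalemxAl uRv scale_scalar_mx.
  by rewrite -raddfN -raddfD /= -mulrBr mulVf.
- rewrite mul_scalar_mx -scalemxAl -mulmxA mulVmx // mulmx1 scalerN.
  by rewrite addNr.
- rewrite mul_mx_scalar scalerA mulmxN mulmxDl -!scalemxAl.
  rewrite -[invmx C *m v *m (u *m invmx C) *m v](mulmxA (invmx C *m v)).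
  rewrite [u *m invmx C *m v]uRv mul_mx_scalar scalerA.
  rewrite -{2}[invmx C *m v]scale1r -scalerDl -scalerBl.
  have -> : a / s - (1 + s^-1 * w) = 0 by rewrite /s; field.
  by rewrite scale0r.
- rewrite mulmxN -scalemxAl mulmxDl mulVmx // -scalemxAl -!mulmxA mulVmx //.
  by rewrite mulmx1 addrCA addNr addr0.
Qed.

Lemma blockE k (A : 'M[R]_(1 + k)) x :
  x%:M - A = block_mx (x - A 0 0)%:M (- ursubmx A) (- dlsubmx A)
                      (x%:M - drsubmx A).
Proof.
rewrite -{1}(submxK A) scalar_mx_block opp_block_mx add_block_mx.
congr block_mx; rewrite ?sub0r //.
rewrite [X in _ - X]mx11_scalar -raddfB /=; congr (_ - _)%:M.
by rewrite !mxE; have -> : lshift k (0 : 'I_1) = 0 by apply/val_inj.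
Qed.

Lemma max_seq (s : seq R) x : exists2 b, b \in x :: s & forall z, z \in x :: s -> z <= b.
Proof.
elim: s x => [|y s IH] x.
  by exists x; rewrite ?inE // => z; rewrite inE => /eqP ->.
have [b bs hb] := IH y.
case: (leP x b) => xb.
  exists b; first by rewrite inE bs orbT.
  by move=> z; rewrite inE => /orP [/eqP ->|/hb].
exists x; first by rewrite inE eqxx.
move=> z; rewrite inE => /orP [/eqP ->|/hb zb] //; exact: le_trans zb (ltW xb).
Qed.

Lemma cp_pos n (A : 'M[R]_n) l : (forall y, l <= y -> ~~ root (char_poly A) y) ->
  0 < \det (l%:M - A).
Proof. by move=> h; rewrite -cpE; apply: monic_pos (char_poly_monic A) h. Qed.

Lemma metzler_inv k : forall (A : 'M[R]_k) (l : R), metzler A ->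
  (forall y, l <= y -> ~~ root (char_poly A) y) ->
  (l%:M - A) \in unitmx /\ nn (invmx (l%:M - A)).
Proof.
elim: k => [|k IH] A l mA hr.
  by split; [rewrite unitmxE det_mx00 unitr1 | move=> [] ].
have Au : (l%:M - A) \in unitmx by rewrite unitmxE unitfE gt_eqF // cp_pos.
split => //.
pose A' : 'M[R]_(1 + k) := A.
pose B := drsubmx A'; pose u := ursubmx A'; pose v := dlsubmx A'; pose a := A' 0 0.
have mB : metzler B.
  move=> i j ij; rewrite !mxE; apply: mA; by apply: contra ij => /eqP /(congr1 val) /= /eqP; rewrite eqn_add2l.
have nu : nn u by move=> i j; rewrite !mxE; apply: mA; apply/eqP => /(congr1 val) /=; rewrite ord1 /= => /esym/eqP; rewrite gtn_eqF.
have nv : nn v by move=> i j; rewrite !mxE; apply: mA; apply/eqP => /(congr1 val) /=; rewrite ord1 /= => /eqP; rewrite gtn_eqF.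
have hB : forall y, l <= y -> ~~ root (char_poly B) y.
  move=> y ly; apply/negP => ry.
  have pB0 : char_poly B != 0 by apply: monic_neq0; apply: char_poly_monic.
  set sr := roots (char_poly B) (l - 1) (cauchy_bound (char_poly B)).
  have insr : forall z, l <= z -> root (char_poly B) z -> z \in sr.
    move=> z lz rz; rewrite -(roots_on_roots _ _ pB0) rz andbT.
    have := root_in_cauchy_bound pB0 rz; rewrite !in_itv /= => /andP [_ ->].
    by rewrite andbT (lt_le_trans _ lz) // ltrBlDr ltrDl ltr01.
  have [b bs hb] := max_seq (behead sr) (head 0 sr).
  have ysr := insr y ly ry.
  have e : head 0 sr :: behead sr = sr by case: (sr) ysr.
  rewrite e in bs hb.
  have rb : root (char_poly B) b := roots_on_root (roots_on_roots _ _ pB0) bs.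
  have lb : l <= b by rewrite (le_trans ly) // hb.
  have noroot : forall z, b < z -> ~~ root (char_poly B) z.
    move=> z bz; apply/negP => rz.
    by move: (hb z (insr z (le_trans lb (ltW bz)) rz)); rewrite leNgt bz.
  pose q := char_poly A - char_poly B * ('X - a%:P).
  have qneg : forall z, b < z -> q.[z] <= 0.
    move=> z bz.
    have hz : forall t, z <= t -> ~~ root (char_poly B) t.
      by move=> t zt; apply: noroot; exact: lt_le_trans bz zt.
    have [Cu nR] := IH B z mB hz.
    have cB := @cp_pos _ B z hz.
    have := @schur_det _ (z - a) u v _ Cu; rewrite -blockE -!cpE => /= hA.
    have hA' : (char_poly A).[z] = _ := hA.
    have w0 : 0 <= (u *m invmx (z%:M - B) *m v) 0 0 by apply: nn_mul => //; apply: nn_mul.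
    rewrite -cpE in cB.
    rewrite /q hornerD hornerN hornerM hornerXsubC hA'.
    move: w0 cB; set w := (_ *m _ *m _) 0 0; set c := (char_poly B).[z]; nra.
  have qb : 0 < q.[b].
    rewrite /q hornerD hornerN hornerM (rootP rb) mul0r subr0.
    by apply: monic_pos (char_poly_monic A) _ => t bt; exact: hr t (le_trans lb bt).
  have [d d0 hd] := poly_cont b q qb.
  have h1 : `|b + d / 2 - b| < d.
    rewrite addrAC subrr add0r ger0_norm; lra.
  have h2 := qneg (b + d / 2) ltac:(lra).
  move: (hd _ h1); rewrite ltr_norml => /andP [h3 h4]; lra.
have [Cu nR] := IH B l mB hB.
have cB := @cp_pos _ B l hB.
have cA := @cp_pos _ A l hr.
have := @schur_det _ (l - a) u v _ Cu; rewrite -blockE => /= hA.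
have hA' : \det (l%:M - A) = _ := hA.
rewrite hA' in cA.
have s0 : 0 < l - a - (u *m invmx (l%:M - B) *m v) 0 0.
  by move: cA; rewrite pmulr_rgt0.
have si : 0 <= (l - a - (u *m invmx (l%:M - B) *m v) 0 0)^-1 by rewrite invr_ge0 ltW.
change (nn (invmx (l%:M - A'))).
rewrite blockE (@schur_inv _ (l - a) u v _ Cu (lt0r_neq0 s0)) /=.
apply: nn_block.
- exact: nn_scalar1.
- by apply: nn_scale => //; apply: nn_mul.
- by apply: nn_scale => //; apply: nn_mul.
- apply: nn_add => //; apply: nn_scale => //.
  by apply: nn_mul; apply: nn_mul.
Qed.

Lemma StN m p (N : 'M[R]_(m.+1, p)) i j :
  ((Smx R m)^T *m N) i j = N (widen_ord (leqnSn m) i) j.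
Proof.
rewrite mxE (bigD1 (widen_ord (leqnSn m) i)) //= big1 ?addr0.
  by rewrite !mxE eqxx mul1r.
by move=> l /negbTE hl; rewrite !mxE hl mul0r.
Qed.

Lemma NS m p (N : 'M[R]_(p, m.+1)) i j :
  (N *m Smx R m) i j = N i (widen_ord (leqnSn m) j).
Proof.
rewrite mxE (bigD1 (widen_ord (leqnSn m) j)) //= big1 ?addr0.
  by rewrite !mxE eqxx mulr1.
by move=> l /negbTE hl; rewrite !mxE hl mulr0.
Qed.

Lemma eTN m p (N : 'M[R]_(m.+1, p)) i j :
  ((en R m)^T *m N) i j = N ord_max j.
Proof.
rewrite mxE (bigD1 ord_max) //= big1 ?addr0.
  by rewrite !mxE eqxx mul1r.
by move=> l /negbTE hl; rewrite !mxE hl mul0r.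
Qed.

Lemma Ne m p (N : 'M[R]_(p, m.+1)) i j :
  (N *m en R m) i j = N i ord_max.
Proof.
rewrite mxE (bigD1 ord_max) //= big1 ?addr0.
  by rewrite !mxE eqxx mulr1.
by move=> l /negbTE hl; rewrite !mxE hl mulr0.
Qed.

Lemma widen_neq m (i : 'I_m) : (widen_ord (leqnSn m) i == ord_max) = false.
Proof. by apply/negbTE; rewrite -val_eqE /= ltn_eqF. Qed.

Lemma Ste m : (Smx R m)^T *m en R m = 0.
Proof. by apply/matrixP => i j; rewrite StN !mxE widen_neq. Qed.

Lemma eTS m : (en R m)^T *m Smx R m = 0.
Proof. by apply/matrixP => i j; rewrite NS !mxE widen_neq. Qed.

Lemma eTe m : (en R m)^T *m en R m = 1%:M.
Proof. by apply/matrixP => i j; rewrite eTN !mxE !ord1 eqxx. Qed.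

Lemma decomp m : Smx R m *m (Smx R m)^T + en R m *m (en R m)^T = 1%:M.
Proof.
apply/matrixP => i j; rewrite !mxE big_ord1 !mxE.
have [im|inm] := eqVneq i ord_max.
  rewrite im big1 ?add0r; last by move=> l _; rewrite !mxE eq_sym widen_neq mul0r.
  by rewrite mul1r eq_sym.
have ilt : (i < m)%N.
  by move: (ltn_ord i) inm; rewrite ltnS leq_eqVlt -val_eqE /= => /orP [->|].
pose i' : 'I_m := Ordinal ilt.
have wi : widen_ord (leqnSn m) i' = i by apply/val_inj.
rewrite (bigD1 i') //= big1 ?addr0.
  by rewrite !mxE wi eqxx mul1r mul0r addr0 eq_sym.
move=> l li; rewrite !mxE.
suff -> : (i == widen_ord (leqnSn m) l) = false by rewrite mul0r.
apply/negbTE; rewrite -wi; apply: contra li => /eqP h; apply/eqP.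
by apply/val_inj; move: (congr1 val h).
Qed.
End S.

Theorem mainTheorem10 (R : realType) (m : nat) (M : 'M[R]_m.+1) :
  (1 <= m)%N ->
  metzler M -> output_unstable M -> M \in unitmx ->
  (nonneg_mx ((Smx R m)^T *m invmx M *m en R m)
   /\ nonneg_mx ((en R m)^T *m invmx M *m Smx R m)
   /\ 0 < ((en R m)^T *m invmx M *m en R m) 0 0)
  /\
  ((forall b0 : 'cV[R]_m.+1, nonneg_mx b0 ->
      - ((en R m)^T *m invmx M *m b0) 0 0 <= 0)
   /\ - ((en R m)^T *m invmx M *m en R m) 0 0 < 0).
Proof.
move=> _ mM [hw d0] Mu.
pose S := Smx R m; pose e := en R m; pose N := invmx M.
pose A := S^T *m M *m S.
have AE : forall i j, A i j = M (widen_ord (leqnSn m) i) (widen_ord (leqnSn m) j).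
  by move=> i j; rewrite /A NS StN.
have mA : metzler A.
  move=> i j ij; rewrite AE; apply: mM; apply: contra ij => /eqP /(congr1 val) /= h.
  by apply/eqP/val_inj.
have [Au nP] := @metzler_inv R m A 0 mA (fun y y0 => @hurwitz_noroot R m A hw y y0).
pose P := invmx (0%:M - A).
pose bv := S^T *m M *m e; pose c := e^T *m M *m S; pose d := e^T *m M *m e.
have nbv : nn R bv by move=> i j; rewrite /bv Ne StN; apply: mM; rewrite widen_neq.
have nc : nn R c by move=> i j; rewrite /c NS eTN; apply: mM; rewrite eq_sym widen_neq.
have MN : M *m N = 1%:M by rewrite mulmxV.
have NM : N *m M = 1%:M by rewrite mulVmx.
pose x := S^T *m N *m e; pose y := e^T *m N *m e; pose z := e^T *m N *m S.
have DE := decomp R m; rewrite -/S -/e in DE.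
have E1 : A *m x + bv *m y = 0.
  have h : S^T *m M *m (S *m S^T + e *m e^T) *m N *m e = 0.
    by rewrite DE mulmx1 -(mulmxA _ M N) MN mulmx1 Ste.
  rewrite mulmxDr !mulmxDl !mulmxA in h.
  by rewrite /A /x /bv /y !mulmxA.
have E2 : c *m x + d *m y = 1%:M.
  have h : e^T *m M *m (S *m S^T + e *m e^T) *m N *m e = 1%:M.
    by rewrite DE mulmx1 -(mulmxA _ M N) MN mulmx1 eTe.
  rewrite mulmxDr !mulmxDl !mulmxA in h.
  by rewrite /c /x /d /y !mulmxA.
have E3 : z *m A + y *m c = 0.
  have h : e^T *m N *m (S *m S^T + e *m e^T) *m M *m S = 0.
    by rewrite DE mulmx1 -(mulmxA _ N M) NM mulmx1 eTS.
  rewrite mulmxDr !mulmxDl !mulmxA in h.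
  by rewrite /c /z /A /y !mulmxA.
have E4 : forall b0 : 'cV[R]_m.+1,
    e^T *m N *m b0 = z *m (S^T *m b0) + y *m (e^T *m b0).
  move=> b0; rewrite -[b0 in LHS]mul1mx -DE mulmxDl !mulmxDr !mulmxA.
  by [].
have hx' : (0%:M - A) *m x = bv *m y.
  by rewrite mulmxBl mul_scalar_mx scale0r sub0r; apply/eqP; rewrite eq_sym -addr_eq0 addrC E1.
have hx : x = P *m (bv *m y) by rewrite -hx' mulmxA mulVmx // mul1mx.
have hz' : z *m (0%:M - A) = y *m c.
  by rewrite mulmxBr mul_mx_scalar scale0r sub0r; apply/eqP; rewrite eq_sym -addr_eq0 addrC E3.
have hz : z = y *m c *m P by rewrite -hz' -mulmxA mulmxV // mulmx1.
have ey : ((c *m P *m bv) 0 0 + d 0 0) * y 0 0 = 1.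
  have h0 : (c *m P *m bv + d) *m y = 1%:M by rewrite -E2 hx mulmxDl !mulmxA.
  have m11 : forall K Y : 'M[R]_1, (K *m Y) 0 0 = K 0 0 * Y 0 0.
    by move=> K Y; rewrite mxE big_ord1.
  have := congr1 (fun X : 'M[R]_1 => X 0 0) h0; rewrite /= m11 [in X in X -> _]mxE.
  by move=> ->; rewrite mxE.
have g0 : 0 <= (c *m P *m bv) 0 0 by apply: nn_mul => //; apply: nn_mul.
have y0 : 0 < y 0 0.
  move: ey g0 d0; rewrite -/d; set Y := y 0 0; set g := _ 0 0; set dd := d 0 0; nra.
have ny : nn R y by move=> i j; rewrite !ord1 ltW.
have nz : nn R z by rewrite hz; apply: nn_mul => //; apply: nn_mul.
split; first split; last split.
- by rewrite -/S -/e -/N -/x hx; apply: nn_mul => //; apply: nn_mul.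
- split; [exact: nz | exact: y0].
- move=> b0 nb0; rewrite oppr_le0 -/e -/N E4.
  apply: nn_add; apply: nn_mul => //.
    by move=> i j; rewrite StN.
  by move=> i j; rewrite eTN.
- by rewrite oppr_lt0.
Qed.
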